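(* Let $X$ be a compact metric space, $f:X\to X$ continuous, $n\ge1$ an integer and $x\in X$. If $\omega_f(x)\subset \mathrm{Fix}(f^n)$, then the number of connected components of $\omega_f(x)$ divides $n$.
   Context: $\mathrm{Fix}(g)$ denotes the set of fixed points of $g$, and $f^n$ is the $n$-th iterate of $f$. The $\omega$-limit set is $\omega_f(x)=\{y\in X:\ \exists\, n_i\to+\infty,\ f^{n_i}(x)\to y\}$. *)

(* Defs.v *)
From HB Require Import structures.
From mathcomp Require Import all_boot all_order all_algebra.
From mathcomp Require Import all_classical all_reals all_analysis.
Set Implicit Arguments. Unset Strict Implicit. Unset Printing Implicit Defensive.
Import Order.TTheory GRing.Theory Num.Theory.
Local Open Scope classical_set_scope.

Definition omega_limit {X : topologicalType} (f : X -> X) (x : X) : set X :=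
  [set y | exists phi : nat -> nat,
      (forall M : nat, \forall i \near \oo, (M <= phi i)%N) /\
      ((fun i => iter (phi i) f x) @ \oo --> y)].

Definition Fix {X : Type} (g : X -> X) : set X := [set y | g y = y].

Definition components {X : topologicalType} (A : set X) : set (set X) :=
  connected_component A @` A.

(* Main.v *)
From HB Require Import structures.
From mathcomp Require Import all_boot all_order all_algebra.
From mathcomp Require Import all_classical all_reals all_analysis.
Require Import Defs.
From mathcomp Require Import zify.
Set Implicit Arguments. Unset Strict Implicit. Unset Printing Implicit Defensive.
Import Order.TTheory GRing.Theory Num.Theory.
Local Open Scope classical_set_scope.
Local Open Scope ring_scope.

Definition cl (R : realType) (X : metricType R) (u : nat -> X) : set X :=
  [set y | forall e : R, 0 < e -> forall M : nat, exists2 m : nat, (M <= m)%N & ball y e (u m)].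

Lemma cluster_inf (R : realType) (X : metricType R) (u : nat -> X) (P : nat -> Prop) :
  compact [set: X] -> (forall M, exists2 m, (M <= m)%N & P m) ->
  exists y : X, forall e : R, 0 < e -> forall M : nat,
     exists m : nat, [/\ (M <= m)%N, P m & ball y e (u m)].
Proof.
move=> cX Pinf.
pose B := fun M : nat => [set m : nat | (M <= m)%N /\ P m].
have FF : Filter (filter_from setT B).
  apply: filter_fromT_filter; first by exists 0%N.
  move=> i j; exists (maxn i j) => m [h Pm]; split; split => //.
    by apply: leq_trans h; exact: leq_maxl.
  by apply: leq_trans h; exact: leq_maxr.
have PF : ProperFilter (filter_from setT B).
  apply: filter_from_proper => // M _; have [m h1 h2] := Pinf M; by exists m.
have [y [_ cy]] := cX (u @ filter_from setT B) _ filterT.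
exists y => e e0 M.
have FB : (u @ filter_from setT B) (u @` B M) by exists M => // m Bm; exists m.
have [_ [[m [Mm Pm] <-] ?]] := cy (u @` B M) (ball y e) FB (nbhsx_ballx _ _ e0).
by exists m.
Qed.

Lemma omegaE (R : realType) (X : metricType R) (f : X -> X) (x : X) :
  omega_limit f x = cl (fun m => iter m f x).
Proof.
apply/seteqP; split => y.
  move=> [phi [hM hc]] e e0 M.
  have [i [h1 h2]] := filter_ex (filterI (hM M) (cvg_ball hc e0)).
  by exists (phi i).
move=> hy.
have /choice [phi hphi] : forall k : nat, exists m : nat,
   (k <= m)%N /\ ball y (k.+1%:R^-1) (iter m f x).
  move=> k; have [m h1 h2] := hy (k.+1%:R^-1) ltac:(by []) k; by exists m.
exists phi; split.
  by move=> M; exists M => // i /= Mi; apply: leq_trans Mi (proj1 (hphi i)).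
apply/cvg_ballP => e e0.
apply: filterS (near_infty_natSinv_lt (PosNum e0)) => i /= hi.
apply: le_ball (proj2 (hphi i)); exact: ltW.
Qed.

Lemma cl_closed (R : realType) (X : metricType R) (u : nat -> X) : closed (cl u).
Proof.
move=> y hy e e0 M.
have e20 : 0 < e / 2 by rewrite divr_gt0.
have [c [hc yc]] := hy _ (nbhsx_ballx _ _ e20).
have [m Mm cm] := hc _ e20 M.
exists m => //; rewrite (splitr e); exact: (ball_triangle yc cm).
Qed.

Lemma cl_shift1 (R : realType) (X : metricType R) (u : nat -> X) :
  cl (fun m => u m.+1) = cl u.
Proof.
apply/seteqP; split => y hy e e0 M.
  have [m Mm h] := hy e e0 M; exists m.+1 => //; exact: leqW.
have [m Mm h] := hy e e0 M.+1; case: m Mm h => // m Mm h; by exists m.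
Qed.

Lemma cl_sub (R : realType) (X : metricType R) (u : nat -> X) (g : nat -> nat) :
  (forall m, (m <= g m)%N) -> cl (fun m => u (g m)) `<=` cl u.
Proof.
move=> hg y hy e e0 M; have [m Mm h] := hy e e0 M; exists (g m) => //.
exact: leq_trans Mm (hg m).
Qed.

Lemma cl_image (R : realType) (X : metricType R) (u : nat -> X) (f : X -> X) :
  continuous f -> f @` cl u `<=` cl (fun m => f (u m)).
Proof.
move=> cf _ [y hy <-] e e0 M.
have [d d0 hd] := (nbhs_ballP _ _).1 (cvg_ball (cf y) e0).
have [m Mm h] := hy d d0 M; exists m => //; exact: hd.
Qed.

Lemma cl_nonempty (R : realType) (X : metricType R) (u : nat -> X) :
  compact [set: X] -> cl u !=set0.
Proof.
move=> cX; have [y hy] := @cluster_inf R X u (fun _ => True) cX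
   ltac:(by move=> M; exists M).
exists y => e e0 M; have [m [h1 _ h2]] := hy e e0 M; by exists m.
Qed.

Lemma cl_cover (R : realType) (X : metricType R) (u : nat -> X) (n : nat) :
  (0 < n)%N -> cl u `<=`
  [set y | exists2 i, (i < n)%N & cl (fun m => u (n * m + i)%N) y].
Proof.
move=> n0 y hy; apply: contrapT => hn.
have H : forall k, (k <= n)%N -> exists e : R, 0 < e /\ exists M : nat,
   forall i m, (i < k)%N -> (M <= m)%N -> ~ ball y e (u (n * m + i)%N).
  elim=> [_|k IH kn].
    by exists 1; split => //; exists 0%N.
  have [e [e0 [M hM]]] := IH (ltnW kn).
  have hk : ~ cl (fun m => u (n * m + k)%N) y by move=> h; apply: hn; exists k.
  have [e' [e'0 [M' hM']]] : exists e' : R, 0 < e' /\ exists M' : nat,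
      forall m, (M' <= m)%N -> ~ ball y e' (u (n * m + k)%N).
    apply: contrapT => H; apply: hk => e' e'0 M'; apply: contrapT => H2.
    apply: H; exists e'; split => //; exists M' => m Mm b; apply: H2; by exists m.
  exists (Order.min e e'); split; first by rewrite lt_min e0 e'0.
  exists (maxn M M') => i m; rewrite ltnS leq_eqVlt => /orP [/eqP -> | ik] Mm b.
    apply: (hM' m); first by apply: leq_trans Mm; exact: leq_maxr.
    by apply: le_ball b; rewrite ge_min lexx orbT.
  apply: (hM i m ik); first by apply: leq_trans Mm; exact: leq_maxl.
  by apply: le_ball b; rewrite ge_min lexx.
have [e [e0 [M hM]]] := H n (leqnn n).
have [m Mm b] := hy e e0 (M * n)%N.
apply: (hM (m %% n)%N (m %/ n)%N); first by rewrite ltn_pmod.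
  by rewrite leq_divRL.
by rewrite mulnC -divn_eq.
Qed.

Lemma sep_dist (R : realType) (X : metricType R) (C A B : set X) :
  compact [set: X] -> closed C -> A `<=` C -> C = A `|` B ->
  separated A B ->
  exists2 d : R, 0 < d & forall a b, A a -> B b -> ~ ball a d b.
Proof.
move=> cX clC AC CE [sAB sBA].
apply: contrapT => H.
have /choice [ab hab] : forall k : nat, exists ab : X * X,
    [/\ A ab.1, B ab.2 & ball ab.1 (k.+1%:R^-1) ab.2].
  move=> k; apply: contrapT => Hk; apply: H; exists (k.+1%:R^-1) => // a b Aa Bb bab.
  by apply: Hk; exists (a, b).
have [p hp] := @cluster_inf R X (fun k => (ab k).1) (fun _ => True) cX
   ltac:(by move=> M; exists M).
have pA : closure A p.
  move=> S /nbhs_ballP [e e0 hS]; have [m [_ _ hm]] := hp e e0 0%N.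
  exists (ab m).1; split; [by case: (hab m) | exact: hS].
have pB : closure B p.
  move=> S /nbhs_ballP [e e0 hS].
  have e20 : 0 < e / 2 by rewrite divr_gt0.
  have [K _ hK] := near_infty_natSinv_lt (PosNum e20).
  have [m [Km _ hm]] := hp (e / 2) e20 K.
  have [_ Bm bm] := hab m.
  exists (ab m).2; split => //; apply: hS; rewrite (splitr e).
  apply: ball_triangle hm _; apply: le_ball bm; apply: ltW; exact: hK.
have Cp : C p by apply: clC; apply: closureS pA.
move: Cp; rewrite CE => -[Ap|Bp].
  by have : (A `&` closure B) p by []; rewrite sBA.
by have : (closure A `&` B) p by []; rewrite sAB.
Qed.

Lemma cl_connected (R : realType) (X : metricType R) (g : X -> X) (z : X) :
  compact [set: X] -> continuous g ->
  cl (fun m => iter m g z) `<=` Fix g -> connected (cl (fun m => iter m g z)).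
Proof.
move=> cX cg hfix.
set u := fun m => iter m g z; set C := cl u.
apply: contrapT => /connectedPn [E [E0 CE sep]].
set A := E false; set B := E true.
have AC : A `<=` C by rewrite CE => w Aw; left.
have BC : B `<=` C by rewrite CE => w Bw; right.
have [d d0 hd] := sep_dist cX (@cl_closed _ _ u) AC CE sep.
have d20 : 0 < d / 2 by rewrite divr_gt0.
pose SA w := exists2 a, A a & ball a (d / 2) w.
pose SB w := exists2 b, B b & ball b (d / 2) w.
have excl : forall w, SA w -> SB w -> False.
  move=> w [a Aa aw] [b Bb bw]; apply: (hd a b Aa Bb).
  rewrite (splitr d); apply: ball_triangle aw _; exact: ball_sym.
have [M0 hM0] : exists M0, forall m, (M0 <= m)%N -> SA (u m) \/ SB (u m).
  apply: contrapT => H.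
  have inf : forall M, exists2 m, (M <= m)%N & ~ (SA (u m) \/ SB (u m)).
    move=> M; apply: contrapT => H2; apply: H; exists M => m Mm.
    apply: contrapT => H3; apply: H2; by exists m.
  have [p hp] := @cluster_inf _ _ u _ cX inf.
  have Cp : C p by move=> e e0 M; have [m [h1 _ h2]] := hp e e0 M; exists m.
  have [m [_ hm bm]] := hp _ d20 0%N.
  apply: hm; move: Cp; rewrite CE => -[Ap|Bp]; [left|right]; by exists p.
have SAinf : forall M, exists2 m, (M <= m)%N & SA (u m).
  move=> M; have [a Aa] := E0 false; have [m Mm h] := AC _ Aa _ d20 M.
  by exists m => //; exists a.
have SBinf : forall M, exists2 m, (M <= m)%N & SB (u m).
  move=> M; have [b Bb] := E0 true; have [m Mm h] := BC _ Bb _ d20 M.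
  by exists m => //; exists b.
have trans : forall k m, (M0 <= m)%N -> SA (u m) -> SB (u (m + k)%N) ->
    exists j, [/\ (m <= j)%N, SA (u j) & SB (u j.+1)].
  elim=> [|k IH] m Mm hA hB; first by rewrite addn0 in hB; case: (excl _ hA hB).
  have := hM0 m.+1 (leqW Mm); case=> h.
    have [j [h1 h2 h3]] := IH m.+1 (leqW Mm) h ltac:(by rewrite addSnnS).
    by exists j; split => //; apply: ltnW.
  by exists m.
have tinf : forall M, exists2 m, (M <= m)%N & (SA (u m) /\ SB (u m.+1)).
  move=> M; have [ma hma Ama] := SAinf (maxn M M0).
  have [mb hmb Bmb] := SBinf ma.
  have [j [h1 h2 h3]] := trans (mb - ma)%N ma
     (leq_trans (leq_maxr M M0) hma) Ama ltac:(by rewrite subnKC).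
  exists j => //; apply: leq_trans h1; exact: leq_trans (leq_maxl M M0) hma.
have [p hp] := @cluster_inf _ _ u _ cX tinf.
have Cp : C p by move=> e e0 M; have [m [h1 _ h2]] := hp e e0 M; exists m.
have gp : g p = p := hfix p Cp.
have [eta eta0 heta] := (nbhs_ballP _ _).1 (cvg_ball (cg p) d20).
have eta'0 : 0 < Order.min eta (d / 2) by rewrite lt_min eta0 d20.
have [m [_ [hA hB] bm]] := hp _ eta'0 0%N.
have b1 : ball p (d / 2) (u m.+1).
  rewrite -[in ball p]gp; apply: heta; apply: le_ball bm; by rewrite ge_min lexx.
have b0 : ball p (d / 2) (u m) by apply: le_ball bm; rewrite ge_min lexx orbT.
move: Cp; rewrite CE => -[Ap|Bp].
  by apply: (excl (u m.+1)) => //; exists p.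
by apply: (excl (u m)) => //; exists p.
Qed.

Lemma comb (T : Type) (K : nat -> T) (n : nat) : (0 < n)%N ->
  (forall i j, K i = K j -> K i.+1 = K j.+1) -> (forall i, K (i + n)%N = K i) ->
  exists d, [/\ (d %| n)%N, K @` `I_n = K @` `I_d &
     forall i j, (i < d)%N -> (j < d)%N -> K i = K j -> i = j].
Proof.
move=> n0 Ksh Kper.
have Kshk : forall k i j, K i = K j -> K (i + k)%N = K (j + k)%N.
  elim=> [|k IH] i j h; first by rewrite !addn0.
  by rewrite !addnS; apply: Ksh; apply: IH.
have ex : exists d, (0 < d)%N && `[< K d = K 0%N >].
  exists n; rewrite n0 /=; apply/asboolP; by rewrite -(Kper 0%N) add0n.
case: (ex_minnP ex) => d /andP [d0 /asboolP Kd] dmin.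
have Kmod : forall m, K m = K (m %% d)%N.
  move=> m; rewrite {1}(divn_eq m d); move: (m %/ d)%N => q.
  elim: q => [|q IH]; first by rewrite mul0n add0n.
  rewrite mulSn -addnA.
  by have := Kshk (q * d + m %% d)%N d 0%N Kd; rewrite add0n => ->.
have dn : (d <= n)%N.
  apply: dmin; rewrite n0 /=; apply/asboolP; by rewrite -(Kper 0%N) add0n.
exists d; split.
- apply/eqP; apply: contrapT => /eqP hne.
  have hlt : (n %% d < d)%N by rewrite ltn_pmod.
  have : (d <= n %% d)%N.
    apply: dmin; rewrite lt0n hne /=; apply/asboolP.
    by rewrite -Kmod -(Kper 0%N) add0n.
  by rewrite leqNgt hlt.
- apply/seteqP; split => _ [i hi <-].
    exists (i %% d)%N; last by rewrite -Kmod.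
    by rewrite /= ltn_pmod.
  by exists i => //; rewrite /=; apply: leq_trans hi dn.
- have key : forall i j, (i < j)%N -> (j < d)%N -> K i = K j -> False.
    move=> i j ij jd h.
    have := Kshk (n - i)%N i j h.
    have jn : (j < n)%N by apply: leq_trans jd dn.
    have -> : (i + (n - i) = 0 + n)%N by lia.
    have -> : (j + (n - i) = (j - i) + n)%N by lia.
    rewrite !Kper => /esym hK.
    have : (d <= j - i)%N.
      apply: dmin; rewrite subn_gt0 ij /=; exact/asboolP.
    rewrite leqNgt => /negP; apply; apply: leq_ltn_trans jd; exact: leq_subr.
  move=> i j id jd h; case: (ltngtP i j) => // ij.
    by case: (key i j ij jd h).
  by case: (key j i ij id (esym h)).
Qed.

Lemma iterM_ (T : Type) (f : T -> T) n m y : iter (n * m) f y = iter m (iter n f) y.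
Proof. by elim: m => [|m IH]; rewrite ?muln0 // mulnS iterD IH. Qed.

Lemma iter_cont (T : topologicalType) (f : T -> T) n :
  continuous f -> continuous (iter n f).
Proof.
move=> cf; elim: n => [|n IH] y; first exact: cvg_id.
exact: (continuous_comp (IH y) (cf _)).
Qed.

Local Close Scope ring_scope.
Unset Implicit Arguments.
Local Open Scope card_scope.

Theorem corollary1p2 (R : realType) (X : metricType R) (f : X -> X) (n : nat) (x : X) :
  compact [set: X] -> continuous f -> (1 <= n)%N ->
  omega_limit f x `<=` Fix (iter n f) ->
  exists k : nat, (k %| n)%N /\ components (omega_limit f x) #= `I_k.
Proof.
move=> cX cf n0 hfix.
set W := omega_limit f x.
have WE : W = cl (fun m => iter m f x) := omegaE f x.
pose C i := cl (fun m => iter (n * m + i) f x).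
have CW : forall i, C i `<=` W.
  move=> i; rewrite WE; apply: (@cl_sub _ _ (fun m => iter m f x) (fun m => n * m + i)%N).
  move=> m; exact: leq_trans (leq_pmull m n0) (leq_addr i _).
have CE : forall i, C i = cl (fun m => iter m (iter n f) (iter i f x)).
  by move=> i; rewrite /C; congr cl; apply: funext => m; rewrite iterD iterM_.
have Ccon : forall i, connected (C i).
  move=> i; rewrite CE; apply: cl_connected => //; first exact: iter_cont.
  rewrite -CE; exact: subset_trans (CW i) hfix.
have /choice [c hc] : forall i, exists y, C i y.
  move=> i; have [y hy] := @cl_nonempty _ _ (fun m => iter (n * m + i) f x) cX.
  by exists y.
have Cf : forall i, f @` C i `<=` C i.+1.
  move=> i; apply: subset_trans (cl_image cf) _.
  rewrite /C; have -> : (fun m => f (iter (n * m + i) f x)) =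
     (fun m => iter (n * m + i.+1) f x) by apply: funext => m; rewrite addnS.
  by [].
have Cper : forall i, C (i + n)%N = C i.
  move=> i; rewrite /C -(cl_shift1 (fun m => iter (n * m + i) f x)).
  congr cl; apply: funext => m; congr (iter _ f x); rewrite mulnS; lia.
have Wf : f @` W `<=` W.
  rewrite WE; apply: subset_trans (cl_image cf) _.
  by rewrite -(cl_shift1 (fun m => iter m f x)).
pose K i := connected_component W (c i).
have CK : forall i, C i `<=` K i.
  move=> i; exact: connected_component_max (hc i) (CW i) (Ccon i).
have Kf : forall i, f @` K i `<=` K i.+1.
  move=> i.
  have fK : connected (f @` K i).
    apply: connected_continuous_connected; first exact: component_connected.
    exact: continuous_subspaceT.
  have fci : K i.+1 (f (c i)) by apply: CK; apply: Cf; exists (c i) => //; exact: hc.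
  rewrite /K (same_connected_component fci).
  apply: connected_component_max fK.
    exists (c i) => //; apply: connected_component_refl; apply: CW; exact: hc.
  apply: subset_trans Wf; apply: image_subset; exact: connected_component_sub.
have Ksh : forall i j, K i = K j -> K i.+1 = K j.+1.
  move=> i j Kij.
  have h1 : K i.+1 (f (c i)).
    apply: Kf; exists (c i) => //; apply: connected_component_refl; apply: CW; exact: hc.
  have h2 : K j.+1 (f (c i)).
    apply: Kf; exists (c i) => //; rewrite -Kij.
    apply: connected_component_refl; apply: CW; exact: hc.
  by rewrite /K (same_connected_component h1) (same_connected_component h2).
have Kper : forall i, K (i + n)%N = K i.
  move=> i; have h : K i (c (i + n)%N) by apply: CK; rewrite -Cper; exact: hc.
  by rewrite /K (same_connected_component h).
have comp : components W = K @` `I_n.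
  apply/seteqP; split.
    move=> _ [y Wy <-].
    have Wy' : cl (fun m => iter m f x) y by rewrite -WE.
    have [i ilt Ci] := cl_cover n0 Wy'.
    exists i => //; have h : K i y by apply: CK; exact: Ci.
    by rewrite /K (same_connected_component h).
  move=> _ [i _ <-]; exists (c i) => //; apply: CW; exact: hc.
have [d [dn img inj]] := comb n0 Ksh Kper.
exists d; split => //; rewrite comp img; apply: inj_card_eq.
move=> i j; rewrite !inE /= => hi hj; exact: inj.
Qed.
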